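(* Let $(\vdash,\overline{\cdot},\widehat{\cdot})$ be a setting satisfying Pre-Relevance, let $\mathcal{S},\mathcal{S}'\subseteq\mathcal{L}$ with $\mathcal{S}\mid\mathcal{S}'$, let $\mathcal{E}$ be a preferred extension of $\mathcal{AF}_{\vdash}(\mathcal{S}\cup\mathcal{S}')$ and $\mathcal{E}_1=\mathcal{E}\cap\mathit{Arg}_{\vdash}(\mathcal{S})$. Then $\mathcal{E}_1$ is a preferred extension of $\mathcal{AF}_{\vdash}(\mathcal{S})$.
   Context: $\mathcal{L}$ is the set of formulas of a language built from propositional atoms; $\mathsf{Atoms}(\mathcal{S})$ is the set of atoms occurring in $\mathcal{S}$, and $\mathcal{S}_1\mid\mathcal{S}_2$ means $\mathsf{Atoms}(\mathcal{S}_1)\cap\mathsf{Atoms}(\mathcal{S}_2)=\emptyset$. A setting is $(\vdash,\overline{\cdot},\widehat{\cdot})$ with ${\vdash}\subseteq\wp_{\sf fin}(\mathcal{L})\times\mathcal{L}$ arbitrary, $\overline{\cdot}:\mathcal{L}\to\wp(\mathcal{L})$, $\widehat{\cdot}$ assigning to each nonempty finite set a finite set of formulas, with $\widehat{\emptyset}=\emptyset$. $\mathit{Arg}_{\vdash}(\mathcal{S})=\{(\Gamma,\gamma):\Gamma\subseteq\mathcal{S}\text{ finite},\Gamma\vdash\gamma\}$; $\mathcal{AF}_{\vdash}(\mathcal{S})$ is the attack graph on it where $(\Gamma,\gamma)$ attacks $(\Gamma',\gamma')$ iff $\gamma\in\overline{\phi}$ for some $\phi\in\widehat{\Gamma'}$.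 Complete extension = conflict-free set defending each member (every attacker of a member is attacked by a member) and containing every argument it defends; preferred = $\subseteq$-maximal complete. Pre-Relevance of the setting: (a) for all $\mathcal{S}_1,\mathcal{S}_2,\phi$ with $\mathcal{S}_1\cup\{\phi\}\mid\mathcal{S}_2$, $\mathcal{S}_1\cup\mathcal{S}_2\vdash\phi$ implies $\mathcal{S}_1'\vdash\phi$ for some $\mathcal{S}_1'\subseteq\mathcal{S}_1$; (b) primeness: for all sets of atoms $\mathcal{A}_1\mid\mathcal{A}_2$, all finite $\mathcal{S}_1,\mathcal{T}_1,\mathcal{S}_2,\mathcal{T}_2$ with $\mathsf{Atoms}(\mathcal{S}_i),\mathsf{Atoms}(\mathcal{T}_i)\subseteq\mathcal{A}_i$, and all $\phi,\psi$ with $\psi\in\overline{\phi}$, $\phi\in\widehat{\mathcal{T}_1\cup\mathcal{T}_2}$: if $\mathcal{S}_1\cup\mathcal{S}_2\vdash\psi$ then there are $i\in\{1,2\}$, $\mathcal{S}_i'\subseteq\mathcal{S}_i$, $\phi_i\in\widehat{\mathcal{T}_i}$, $\psi_i\in\overline{\phi_i}$ with $\mathcal{S}_i'\vdash\psi_i$; (c) $\widehat{\Delta}\subseteq\widehat{\Delta\cup\Delta'}$ for all finite $\Delta,\Delta'$. *)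

(* Defs.v *)
From HB Require Import structures.
From mathcomp Require Import all_boot.
From mathcomp Require Import finmap.

Set Implicit Arguments.
Unset Strict Implicit.
Unset Printing Implicit Defensive.

Local Open Scope fset_scope.

Section Defs.

Variables (Atom : Type) (Form : choiceType) (occ : Form -> Atom -> Prop).

Definition AtomsOf (S : Form -> Prop) : Atom -> Prop :=
  fun a => exists2 phi, S phi & occ phi a.

Definition fsetP (D : {fset Form}) : Form -> Prop := fun phi => phi \in D.

(* S1 | S2 : no shared atoms *)
Definition atom_disj (A1 A2 : Atom -> Prop) : Prop :=
  forall a, A1 a -> A2 a -> False.

Definition sep (S1 S2 : Form -> Prop) : Prop :=
  atom_disj (AtomsOf S1) (AtomsOf S2).

(* A setting (|-, overline, hat). [contrary phi psi] means psi \in overline(phi). *)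
Record setting := Setting {
  entails : {fset Form} -> Form -> Prop;
  contrary : Form -> Form -> Prop;
  hat : {fset Form} -> {fset Form};
  hat0 : hat fset0 = fset0
}.

Variable st : setting.

Definition PreRelevance_a : Prop :=
  forall (S1 S2 : {fset Form}) (phi : Form),
    sep (fsetP (phi |` S1)) (fsetP S2) ->
    entails st (S1 `|` S2) phi ->
    exists2 S1' : {fset Form}, S1' `<=` S1 & entails st S1' phi.

Definition PreRelevance_b : Prop :=
  forall (A1 A2 : Atom -> Prop), atom_disj A1 A2 ->
  forall (S1 T1 S2 T2 : {fset Form}),
    (forall a, AtomsOf (fsetP S1) a -> A1 a) ->
    (forall a, AtomsOf (fsetP T1) a -> A1 a) ->
    (forall a, AtomsOf (fsetP S2) a -> A2 a) ->
    (forall a, AtomsOf (fsetP T2) a -> A2 a) ->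
  forall phi psi : Form,
    contrary st phi psi -> phi \in hat st (T1 `|` T2) ->
    entails st (S1 `|` S2) psi ->
    (exists S1' phi1 psi1, [/\ S1' `<=` S1, phi1 \in hat st T1,
                              contrary st phi1 psi1 & entails st S1' psi1]) \/
    (exists S2' phi2 psi2, [/\ S2' `<=` S2, phi2 \in hat st T2,
                              contrary st phi2 psi2 & entails st S2' psi2]).

Definition PreRelevance_c : Prop :=
  forall D D' : {fset Form}, hat st D `<=` hat st (D `|` D').

Definition PreRelevance : Prop :=
  [/\ PreRelevance_a, PreRelevance_b & PreRelevance_c].

Definition argument := ({fset Form} * Form)%type.

Definition Arg (S : Form -> Prop) : argument -> Prop :=
  fun a => (forall phi, phi \in a.1 -> S phi) /\ entails st a.1 a.2.

Definition attacks (a b : argument) : Prop :=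
  exists2 phi, phi \in hat st b.1 & contrary st phi a.2.

(* Extensions of AF(S) = (Arg(S), attacks restricted to Arg(S)) *)
Definition subsetA (E F : argument -> Prop) : Prop := forall a, E a -> F a.

Definition conflict_free (S : Form -> Prop) (E : argument -> Prop) : Prop :=
  subsetA E (Arg S) /\ forall a b, E a -> E b -> ~ attacks a b.

Definition defends (S : Form -> Prop) (E : argument -> Prop) (a : argument) : Prop :=
  forall b, Arg S b -> attacks b a -> exists2 c, E c & attacks c b.

Definition complete_ext (S : Form -> Prop) (E : argument -> Prop) : Prop :=
  [/\ conflict_free S E,
      (forall a, E a -> defends S E a) &
      (forall a, Arg S a -> defends S E a -> E a)].

Definition preferred_ext (S : Form -> Prop) (E : argument -> Prop) : Prop :=
  complete_ext S E /\
  forall E', complete_ext S E' -> subsetA E E' -> subsetA E' E.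

End Defs.

(* Main.v *)
Require Import Defs.
From mathcomp Require Import all_boot finmap.
From Stdlib Require Import ClassicalEpsilon.

Local Open Scope fset_scope.
Set Implicit Arguments.
Unset Strict Implicit.

Lemma att_sub (Form : choiceType) (st : setting Form) (b x c : argument Form) :
  PreRelevance_c st -> x.1 `<=` c.1 -> attacks st b x -> attacks st b c.
Proof.
move=> hc sub [p hp hcp]; exists p => //.
have := hc x.1 c.1; rewrite (fsetUidPr _ _ sub) => /fsubsetP; apply; exact: hp.
Qed.

Lemma split_fset (Form : choiceType) (S S' : Form -> Prop) (G : {fset Form}) :
  (forall f, f \in G -> S f \/ S' f) ->
  exists B1 B2 : {fset Form}, [/\ G = B1 `|` B2, (forall f, f \in B1 -> S f),
     (forall f, f \in B2 -> S' f) & (forall f, f \in B2 -> ~ S f)].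
Proof.
move=> hG.
pose d f := if excluded_middle_informative (S f) then true else false.
have dP f : d f -> S f by rewrite /d; case: excluded_middle_informative.
have dN f : ~~ d f -> ~ S f by rewrite /d; case: excluded_middle_informative.
exists [fset f in G | d f], [fset f in G | ~~ d f]; split.
- apply/fsetP => f; rewrite in_fsetU !inE; by case: (d f); rewrite ?andbT ?andbF ?orbF.
- by move=> f; rewrite !inE => /andP[_ /dP].
- move=> f; rewrite !inE => /andP[/hG [//|h] /dN //].
- by move=> f; rewrite !inE => /andP[_ /dN].
Qed.

Lemma decomp (Atom : Type) (Form : choiceType) (occ : Form -> Atom -> Prop)
  (st : setting Form) (S S' : Form -> Prop) (T1 T2 : {fset Form})
  (c : argument Form) (phi : Form) :
  PreRelevance_b occ st -> sep occ S S' ->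
  (forall f, f \in c.1 -> S f \/ S' f) -> entails st c.1 c.2 ->
  (forall f, f \in T1 -> S f) -> (forall f, f \in T2 -> S' f) ->
  phi \in hat st (T1 `|` T2) -> contrary st phi c.2 ->
  (exists x : argument Form, [/\ x.1 `<=` c.1, Arg st S x &
       exists2 p, p \in hat st T1 & contrary st p x.2]) \/
  (exists x : argument Form, [/\ x.1 `<=` c.1, Arg st S' x,
       (forall f, f \in x.1 -> ~ S f) &
       exists2 p, p \in hat st T2 & contrary st p x.2]).
Proof.
move=> hb hsep hc he hT1 hT2 hphi hcon.
have [B1 [B2 [eqc hB1 hB2 hB2n]]] := @split_fset _ S S' _ hc.
rewrite eqc in he.
have sub1 : B1 `<=` c.1 by rewrite eqc fsubsetUl.
have sub2 : B2 `<=` c.1 by rewrite eqc fsubsetUr.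
have lift (P : Form -> Prop) (B : {fset Form}) : (forall f, f \in B -> P f) ->
    forall a, AtomsOf occ (Defs.fsetP B) a -> AtomsOf occ P a.
  by move=> hP a [f hf ho]; exists f => //; apply: hP.
have [[S1 [p1 [q1 [s1 hp1 hq1 he1]]]]|[S2 [p2 [q2 [s2 hp2 hq2 he2]]]]] :=
  hb (AtomsOf occ S) (AtomsOf occ S') hsep B1 T1 B2 T2
     (lift _ _ hB1) (lift _ _ hT1) (lift _ _ hB2) (lift _ _ hT2) phi c.2 hcon hphi he.
- left; exists (S1, q1); split => //=.
  + exact: fsubset_trans s1 sub1.
  + split => //= f hf; apply: hB1; exact: (fsubsetP s1).
  + by exists p1.
- right; exists (S2, q2); split => //=.
  + exact: fsubset_trans s2 sub2.
  + split => //= f hf; apply: hB2; exact: (fsubsetP s2).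
  + move=> f hf; apply: hB2n; exact: (fsubsetP s2).
  + by exists p2.
Qed.

Theorem lemma8 (Atom : Type) (Form : choiceType) (occ : Form -> Atom -> Prop)
  (st : setting Form) (S S' : Form -> Prop) (E : argument Form -> Prop) :
  PreRelevance occ st ->
  sep occ S S' ->
  preferred_ext st (fun phi => S phi \/ S' phi) E ->
  preferred_ext st S (fun a => E a /\ Arg st S a).
Proof.
move=> [hA hB hC] hsep [[[cfsub cf] def clos] maxE].
pose U := fun phi => S phi \/ S' phi.
have argU : forall x, Arg st S x -> Arg st U x.
  by move=> x [h1 h2]; split => // f hf; left; apply: h1.
have argS'U : forall x, Arg st S' x -> Arg st U x.
  by move=> x [h1 h2]; split => // f hf; right; apply: h1.
have subarg : forall c x, E c -> x.1 `<=` c.1 -> Arg st U x -> E x.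
  move=> c x hc sub hx; apply: (clos) hx _ => b hb hatt.
  exact: (def c hc b hb (att_sub hC sub hatt)).
have nof0 : forall f : Form, f \in (fset0 : {fset Form}) -> S' f.
  by move=> f; rewrite in_fset0.
have nof0' : forall f : Form, f \in (fset0 : {fset Form}) -> S f.
  by move=> f; rewrite in_fset0.
have H1 : forall c b, E c -> Arg st S b -> attacks st c b ->
    exists2 x, (E x /\ Arg st S x) & attacks st x b.
  move=> c b hc hb [p hp hcp].
  have hp' : p \in hat st (b.1 `|` fset0) by rewrite fsetU0.
  case: (@decomp Atom Form occ st S S' b.1 fset0 c p hB hsep (cfsub c hc).1
           (cfsub c hc).2 hb.1 nof0 hp' hcp) =>
     [[x [sub ax [p1 hp1 hc1]]]|[x [_ _ _ [p2 hp2 _]]]].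
  - exists x; last by exists p1.
    by split => //; apply: subarg c x hc sub (argU x ax).
  - by rewrite hat0 in_fset0 in hp2.
split; first split.
- split; first by move=> a [].
  by move=> a b [ha _] [hb _]; exact: cf.
- move=> a [ha _] b hb hatt.
  have [c hc hcb] := def a ha b (argU b hb) hatt.
  exact: H1 c b hc hb hcb.
- move=> a ha hdef; split => //.
  apply: (clos) (argU a ha) _ => b hb [p hp hcp].
  have hp' : p \in hat st (a.1 `|` fset0) by rewrite fsetU0.
  case: (@decomp Atom Form occ st S S' a.1 fset0 b p hB hsep hb.1 hb.2 ha.1 nof0 hp' hcp)
     => [[x [sub ax [p1 hp1 hc1]]]|[x [_ _ _ [p2 hp2 _]]]].
  + have [y [hy _] hyx] := hdef x ax (ex_intro2 _ _ p1 hp1 hc1).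
    by exists y => //; exact: att_sub hC sub hyx.
  + by rewrite hat0 in_fset0 in hp2.
move=> E' [[E'sub E'cf] E'def E'clos] sub1 a ha'.
pose D := fun a => E a \/ E' a.
have E'U : forall x, E' x -> Arg st U x by move=> x hx; apply: argU; apply: E'sub.
have DU : forall x, D x -> Arg st U x by move=> x [hx|hx]; [apply: cfsub|apply: E'U].
have F1 : forall d z, E d -> Arg st S z -> attacks st d z -> exists2 w, E' w & attacks st w z.
  move=> d z hd hz hdz; have [w hw hwz] := H1 d z hd hz hdz.
  by exists w => //; apply: sub1.
have F2 : forall x y, D x -> D y -> ~ attacks st x y.
  move=> x y [hx|hx] [hy|hy] hxy.
  - exact: cf x y hx hy hxy.
  - have [w hw hwy] := F1 x y hx (E'sub y hy) hxy; exact: E'cf w y hw hy hwy.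
  - have [f hf hfx] := def y hy x (E'U x hx) hxy.
    have [w hw hwx] := F1 f x hf (E'sub x hx) hfx; exact: E'cf w x hw hx hwx.
  - exact: E'cf x y hx hy hxy.
have F3 : forall x, D x -> defends st U D x.
  move=> x [hx|hx] b bU hbx.
  - by have [c hc hcb] := def x hx b bU hbx; exists c => //; left.
  - case: hbx => p hp hcp.
    have hp' : p \in hat st (x.1 `|` fset0) by rewrite fsetU0.
    case: (@decomp Atom Form occ st S S' x.1 fset0 b p hB hsep bU.1 bU.2
             (E'sub x hx).1 nof0 hp' hcp) => [[z [sub zS [p1 hp1 hc1]]]|[z [_ _ _ [p2 hp2 _]]]].
    + have [w hw hwz] := E'def x hx z zS (ex_intro2 _ _ p1 hp1 hc1).
      by exists w; [right|exact: att_sub hC sub hwz].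
    + by rewrite hat0 in_fset0 in hp2.
pose Ds := fun a => Arg st U a /\ defends st U D a.
have compl : complete_ext st U Ds.
  split.
  - split; first by move=> x [].
    move=> x y [xU xdef] [yU ydef] hxy.
    have [d hd hdx] := ydef x xU hxy.
    have [d' hd' hd'd] := xdef d (DU d hd) hdx.
    exact: F2 d' d hd' hd hd'd.
  - move=> c [cU cdef] b bU hbc.
    have [d hd hdb] := cdef b bU hbc.
    by exists d => //; split; [exact: DU|exact: F3].
  - move=> x xU xdef; split => //.
    move=> b bU hbx.
    have [ds [dsU dsdef] hdsb] := xdef b bU hbx.
    case: hdsb => p hp hcp.
    have [B1 [B2 [eqb hB1 hB2 _]]] := @split_fset Form S S' b.1 bU.1.
    rewrite eqb in hp.
    case: (@decomp Atom Form occ st S S' B1 B2 ds p hB hsep dsU.1 dsU.2 hB1 hB2 hp hcp)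
      => [[z [sub zS [p1 hp1 hc1]]]|[y [sub yS' yn [p2 hp2 hc2]]]].
    + have zb : attacks st z b.
        exists p1 => //; rewrite eqb; exact: (fsubsetP (hC B1 B2)).
      have zdef : defends st U D z := fun w wU hw => dsdef w wU (att_sub hC sub hw).
      have E'z : E' z.
        apply: (E'clos) zS _ => w wS hw.
        have [d hd hdw] := zdef w (argU w wS) hw.
        by case: hd => hd; [exact: F1 d w hd wS hdw|exists d].
      by exists z => //; right.
    + have yb : attacks st y b.
        exists p2 => //; rewrite eqb fsetUC; exact: (fsubsetP (hC B2 B1)).
      have ydef : defends st U D y := fun w wU hw => dsdef w wU (att_sub hC sub hw).
      have Ey : E y.
        apply: (clos) (argS'U y yS') _ => z zU [q hq hqc].
        have hq' : q \in hat st (fset0 `|` y.1) by rewrite fset0U.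
        case: (@decomp Atom Form occ st S S' fset0 y.1 z q hB hsep zU.1 zU.2 nof0' yS'.1 hq' hqc)
          => [[_ [_ _ [p0 hp0 _]]]|[z' [zsub z'S' _ [q2 hq2 hqc2]]]].
        * by rewrite hat0 in_fset0 in hp0.
        have z'y : attacks st z' y by exists q2.
        have [d hd hdz'] := ydef z' (argS'U z' z'S') z'y.
        case: hd => hd.
        * by exists d => //; exact: att_sub hC zsub hdz'.
        have dS := E'sub d hd.
        case: hdz' => r hr hrc.
        have hr' : r \in hat st (fset0 `|` z'.1) by rewrite fset0U.
        case: (@decomp Atom Form occ st S S' fset0 z'.1 d r hB hsep (E'U d hd).1 dS.2
                 nof0' z'S'.1 hr' hrc) => [[_ [_ _ [p0 hp0 _]]]|[w [wsub wS' wn [r2 hr2 hrc2]]]].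
        * by rewrite hat0 in_fset0 in hp0.
        have w0 : w.1 = fset0.
          apply/fsetP => f; rewrite in_fset0; apply/negbTE/negP => hf.
          apply: (wn f hf); apply: dS.1; exact: (fsubsetP wsub).
        have Ew : E w.
          apply: (clos) (argS'U w wS') _ => b' _ [pp hpp _].
          by rewrite w0 hat0 in_fset0 in hpp.
        exists w => //; apply: att_sub hC zsub _; by exists r2.
      by exists y => //; left.
have EDs : subsetA E Ds by move=> e he; split; [exact: cfsub|apply: F3; left].
have Ea := maxE Ds compl EDs a (conj (E'U a ha') (F3 a (or_intror ha'))).
by split => //; apply: E'sub.
Qed.
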